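(* Let $k$ be a positive integer and let $(X,Y)$ be a partition of $\{1,2,\dots,n\}$ into two sets. Call a pair $(a,b)$ bad if $a<b$, $a\in Y$ and $b\in X$. Assume that for every integer $t$ there are at most $k$ bad pairs $(a,b)$ with $a\le t<b$. Then the total number of bad pairs is at most $k(1+\ln k)$. *)

(* Defs.v *)
From Stdlib Require Import Reals List Arith ZArith Bool.
Import ListNotations.

(* X : nat -> bool is the indicator of X within {1,...,n}; Y is its complement
   in {1,...,n}.  A pair (a,b) is bad if a < b, a \in Y (i.e. X a = false), b \in X. *)
Definition is_bad (X : nat -> bool) (a b : nat) : bool :=
  Nat.ltb a b && negb (X a) && X b.

Definition bad_pairs (n : nat) (X : nat -> bool) : list (nat * nat) :=
  filter (fun p => is_bad X (fst p) (snd p)) (list_prod (seq 1 n) (seq 1 n)).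

Definition bad_crossing (n : nat) (X : nat -> bool) (t : Z) : nat :=
  length (filter (fun p => (Z.leb (Z.of_nat (fst p)) t && Z.ltb t (Z.of_nat (snd p)))%bool)
                 (bad_pairs n X)).

(* Main.v *)
Require Import Defs.
From Stdlib Require Import Reals List Arith ZArith Bool.
From Stdlib Require Import Lia Lra.
Import ListNotations.

Definition cnt {A} (p : A -> bool) (l : list A) := length (filter p l).

Fixpoint sumover {A} (g : A -> nat) (l : list A) : nat :=
  match l with [] => 0 | a :: l' => g a + sumover g l' end.

Lemma lp_sum {A B} (f : A * B -> bool) l1 l2 :
  length (filter f (list_prod l1 l2)) = sumover (fun a => cnt (fun c => f (a, c)) l2) l1.
Proof.
  induction l1 as [|a l1 IH]; simpl; auto.
  rewrite filter_app, length_app, IH. f_equal.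
  unfold cnt. clear IH. induction l2 as [|b l2 IH2]; simpl; auto.
  destruct (f (a, b)); simpl; congruence.
Qed.

Lemma filter_filter' {A} (f g : A -> bool) l :
  filter f (filter g l) = filter (fun x => g x && f x) l.
Proof.
  induction l; simpl; auto. destruct (g a); simpl; auto.
  destruct (f a); simpl; congruence.
Qed.

Lemma sumover_ext {A} (g h : A -> nat) l :
  (forall a, g a = h a) -> sumover g l = sumover h l.
Proof. intros H; induction l; simpl; auto. Qed.

Lemma sumover_const {A} (q : A -> bool) C l :
  sumover (fun a => if q a then C else 0) l = cnt q l * C.
Proof.
  unfold cnt; induction l; simpl; auto. destruct (q a); simpl; lia.
Qed.

Lemma cnt_false {A} (l : list A) : cnt (fun _ => false) l = 0.
Proof. unfold cnt; rewrite filter_false; auto. Qed.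

Lemma cnt_false_ext {A} (p : A -> bool) l : (forall x, p x = false) -> cnt p l = 0.
Proof. intros H. unfold cnt. rewrite (filter_ext _ _ H). rewrite filter_false; auto. Qed.

Section Main.
Variables (n k : nat) (X : nat -> bool).
Let L := seq 1 n.
Definition zz (a : nat) := cnt (fun c => (a <? c) && X c) L.

Lemma crossing_eq (t : nat) :
  bad_crossing n X (Z.of_nat t) =
  cnt (fun a => (a <=? t) && negb (X a)) L * zz t.
Proof.
  unfold bad_crossing, bad_pairs. rewrite filter_filter', lp_sum.
  rewrite <- sumover_const. apply sumover_ext. intros a. simpl.
  destruct ((a <=? t) && negb (X a)) eqn:E.
  - unfold zz, cnt. f_equal. apply filter_ext. intros c.
    unfold is_bad.
    apply andb_true_iff in E as [E1 E2]. apply Nat.leb_le in E1.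
    destruct (X a); simpl in E2; try discriminate. simpl.
    destruct (X c); rewrite ?andb_false_r, ?andb_true_r; simpl; auto.
    destruct (Nat.ltb_spec a c), (Z.leb_spec (Z.of_nat a) (Z.of_nat t)),
      (Z.ltb_spec (Z.of_nat t) (Z.of_nat c)), (Nat.ltb_spec t c);
      simpl; auto; exfalso; lia.
  - transitivity (cnt (fun _ : nat => false) L); [|apply cnt_false].
    unfold cnt. f_equal. apply filter_ext. intros c.
    unfold is_bad. simpl.
    destruct (X a), (X c); simpl; rewrite ?andb_false_r; auto.
    simpl in E. rewrite andb_true_r in E. apply Nat.leb_gt in E.
    destruct (Z.leb_spec (Z.of_nat a) (Z.of_nat t)); simpl;
      rewrite ?andb_false_r; auto; lia.
Qed.

Lemma total_eq :
  length (bad_pairs n X) = sumover (fun a => if X a then 0 else zz a) L.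
Proof.
  unfold bad_pairs. rewrite lp_sum. apply sumover_ext. intros a. simpl.
  unfold is_bad. destruct (X a); simpl.
  - apply cnt_false_ext. intros c. rewrite andb_false_r. auto.
  - unfold zz, cnt. f_equal. apply filter_ext. intros c.
    rewrite andb_true_r. auto.
Qed.

Definition nY (l : list nat) := cnt (fun c => negb (X c)) l.

Lemma count_prefix (t : nat) : t <= n ->
  cnt (fun a => (a <=? t) && negb (X a)) L = nY (seq 1 t).
Proof.
  intros Ht. unfold L, nY, cnt.
  replace n with (t + (n - t)) by lia. rewrite seq_app, filter_app, length_app.
  rewrite (filter_ext_in _ (fun c => negb (X c)) (seq 1 t)).
  2:{ intros c Hc. apply in_seq in Hc. replace (c <=? t) with true; auto.
      symmetry; apply Nat.leb_le; lia. }
  rewrite (filter_ext_in _ (fun _ => false) (seq (1 + t) (n - t))).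
  2:{ intros c Hc. apply in_seq in Hc. replace (c <=? t) with false; auto.
      symmetry; apply Nat.leb_gt; lia. }
  rewrite filter_false. simpl. lia.
Qed.

Fixpoint hs (j : nat) (l : list nat) : nat :=
  match l with
  | [] => 0
  | a :: l' => if X a then hs j l' else k / S j + hs (S j) l'
  end.

Lemma key len : forall s j,
  j = nY (seq 1 s) ->
  (forall a, S s <= a < S s + len -> nY (seq 1 a) * zz a <= k) ->
  sumover (fun a => if X a then 0 else zz a) (seq (S s) len) <= hs j (seq (S s) len).
Proof.
  induction len as [|len IH]; intros s j Hj H; simpl; auto.
  assert (Hs : nY (seq 1 (S s)) = j + (if X (S s) then 0 else 1)).
  { unfold nY, cnt in *. rewrite seq_S, filter_app, length_app. subst j.
    replace (1 + s) with (S s) by lia. simpl. destruct (X (S s)); simpl; lia. }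
  destruct (X (S s)) eqn:E.
  - apply (IH (S s) j). lia. intros a Ha; apply H; lia.
  - assert (Hz : zz (S s) <= k / S j).
    { apply Nat.div_le_lower_bound. lia. rewrite <- (Nat.add_1_r j).
      rewrite <- Hs. apply H. lia. }
    specialize (IH (S s) (S j) ltac:(lia) ltac:(intros a Ha; apply H; lia)).
    change (fst (Nat.divmod k j 0 j)) with (k / S j). lia.
Qed.

Fixpoint F (m : nat) : nat := match m with 0 => 0 | S m' => F m' + k / S m' end.

Lemma hs_F l : forall j, F j + hs j l = F (j + nY l).
Proof.
  unfold nY, cnt. induction l as [|a l IH]; intros j; cbn [hs filter length].
  - rewrite !Nat.add_0_r; reflexivity.
  - destruct (X a); cbn [negb length]; rewrite ?IH; auto.
    rewrite Nat.add_assoc.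
    replace (F j + k / S j) with (F (S j)) by reflexivity. rewrite IH.
    f_equal. lia.
Qed.

Lemma F_mono m d : F m <= F (m + d).
Proof. induction d. rewrite Nat.add_0_r; lia.
  rewrite Nat.add_succ_r; cbn [F]; lia. Qed.

Lemma F_le_k m : F m <= F k.
Proof.
  destruct (Nat.le_gt_cases m k).
  - replace k with (m + (k - m)) by lia. apply F_mono.
  - replace m with (k + (m - k)) by lia. generalize (m - k). intros d.
    induction d. rewrite Nat.add_0_r; lia.
    rewrite Nat.add_succ_r; cbn [F]. rewrite (Nat.div_small k); lia.
Qed.

Fixpoint Hr (m : nat) : R := match m with 0 => 0%R | S m' => (Hr m' + / INR (S m'))%R end.

Lemma F_Hr m : (INR (F m) <= INR k * Hr m)%R.
Proof.
  induction m; cbn [F Hr]. simpl; lra.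
  rewrite plus_INR.
  assert (Hd : (0 < INR (S m))%R) by (apply lt_0_INR; lia).
  assert (H1 : (INR (S m) * INR (k / S m) <= INR k)%R).
  { rewrite <- mult_INR. apply le_INR. apply Nat.Div0.mul_div_le. }
  assert (H2 : (INR (k / S m) <= INR k * / INR (S m))%R).
  { apply (Rmult_le_reg_l (INR (S m))); auto.
    replace (INR (S m) * (INR k * / INR (S m)))%R with (INR k) by (field; lra).
    auto. }
  lra.
Qed.

End Main.

Lemma ln_le_sub1 x : (0 < x)%R -> (ln x <= x - 1)%R.
Proof. intros Hx. pose proof (exp_ineq1_le (ln x)). rewrite exp_ln in H; lra. Qed.

Lemma Hr_ln m : (Hr (S m) <= 1 + ln (INR (S m)))%R.
Proof.
  induction m.
  - simpl. rewrite ln_1. lra.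
  - change (Hr (S (S m))) with (Hr (S m) + / INR (S (S m)))%R.
    set (a := INR (S m)) in *. set (b := INR (S (S m))).
    assert (Ha : (0 < a)%R) by (apply lt_0_INR; lia).
    assert (Hb : b = (a + 1)%R) by (unfold a, b; rewrite (S_INR (S m)); lra).
    assert (Hl : (ln a - ln b <= a / b - 1)%R).
    { replace (ln a - ln b)%R with (ln (a / b)).
      apply ln_le_sub1. unfold Rdiv. apply Rmult_lt_0_compat; auto.
      apply Rinv_0_lt_compat; lra.
      unfold Rdiv. rewrite ln_mult, ln_Rinv; try lra.
      apply Rinv_0_lt_compat; lra. }
    assert (He : (a / b - 1 = - / b)%R) by (rewrite Hb; field; lra).
    lra.
Qed.

Theorem mainTheorem10 (n k : nat) (X : nat -> bool) (hk : (0 < k)%nat)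
  (hcross : forall t : Z, (bad_crossing n X t <= k)%nat) :
  (INR (length (bad_pairs n X)) <= INR k * (1 + ln (INR k)))%R.
Proof.
  assert (Htot : (length (bad_pairs n X) <= F k k)%nat).
  { rewrite total_eq.
    eapply Nat.le_trans.
    - apply (key n k X n 0 0). reflexivity.
      intros a Ha. rewrite <- (count_prefix n X a) by lia.
      rewrite <- (crossing_eq n X a). apply hcross.
    - pose proof (hs_F k X (seq 1 n) 0). simpl in H.
      pose proof (F_le_k k (nY X (seq 1 n))). lia. }
  apply le_INR in Htot.
  pose proof (F_Hr k k).
  destruct k as [|k']; [lia|].
  pose proof (Hr_ln k').
  assert (0 <= INR (S k'))%R by apply pos_INR.
  apply Rmult_le_compat_l with (r := INR (S k')) in H0; auto.
  lra.
Qed.
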